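(* Let $1\le b<\frac{n}{2}-1$. If $T$ is a tree attaining the maximum value of $M_1$ over $\mathcal{CT}^*_{n,b}$, or a tree attaining the maximum value of $M_2$ over $\mathcal{CT}^*_{n,b}$, then $T$ does not simultaneously contain a vertex of degree $2$ and a vertex of degree $3$.
   Context: A chemical tree is a tree with maximum degree at most $4$. A branching vertex is a vertex of degree greater than $2$. $\mathcal{CT}^*_{n,b}$ is the class of all $n$-vertex chemical trees with exactly $b$ branching vertices. $M_1(G)=\sum_v d_v^2$ and $M_2(G)=\sum_{uv\in E(G)}d_ud_v$, where $d_v$ is the degree of $v$. *)

(* Defs.v *)
From mathcomp Require Import all_boot.
Set Implicit Arguments. Unset Strict Implicit. Unset Printing Implicit Defensive.

Section Graphs.
Variable n : nat.
Implicit Types (e : rel 'I_n) (v : 'I_n).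

Definition simple_graph e : Prop :=
  (forall x y, e x y = e y x) /\ (forall x, ~~ e x x).

Definition edges e : {set 'I_n * 'I_n} :=
  [set p : 'I_n * 'I_n | (p.1 < p.2)%N && e p.1 p.2].

Definition deg e v : nat := #|[set u | e v u]|.

Definition is_tree e : Prop :=
  simple_graph e /\ 0 < n /\ (forall x y, connect e x y) /\ #|edges e| = n - 1.

Definition chemical e : Prop := forall v, deg e v <= 4.

Definition num_branching e : nat := #|[set v | 2 < deg e v]|.

Definition in_CT b e : Prop := is_tree e /\ chemical e /\ num_branching e = b.

Definition M1 e : nat := \sum_(v : 'I_n) deg e v ^ 2.
Definition M2 e : nat := \sum_(p in edges e) deg e p.1 * deg e p.2.

Definition is_max_in_CT (I : rel 'I_n -> nat) b e : Prop :=
  in_CT b e /\ forall e', in_CT b e' -> I e' <= I e.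
End Graphs.

(* Main.v *)
Require Import Defs.
From mathcomp Require Import all_boot zify.
Set Implicit Arguments. Unset Strict Implicit. Unset Printing Implicit Defensive.

Section Gen.
Variable n : nat.
Implicit Types (e : rel 'I_n).

Lemma deg_sum e v : deg e v = \sum_b (e v b : nat).
Proof.
rewrite /deg -sum1_card big_mkcond /=; apply: eq_bigr => b _.
by rewrite inE; case: (e v b).
Qed.

Lemma edge_sum e (f : 'I_n -> 'I_n -> nat) :
  simple_graph e -> (forall a b, f a b = f b a) ->
  2 * (\sum_(p in edges e) f p.1 p.2) = \sum_a \sum_b (e a b) * f a b.
Proof.
move=> [sym irr] fsym.
rewrite pair_big /= [RHS](bigID (fun p : 'I_n * 'I_n => p.1 < p.2)) /=.
have E1 : \sum_(p in edges e) f p.1 p.2 = \sum_(p : 'I_n * 'I_n | p.1 < p.2) e p.1 p.2 * f p.1 p.2.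
  rewrite big_mkcond [RHS]big_mkcond /=; apply: eq_bigr => p _.
  rewrite inE; case: (p.1 < p.2); case: (e p.1 p.2) => //=; by rewrite mul1n.
rewrite mul2n -addnn; congr (_ + _).
  by rewrite E1; apply: eq_bigl => p.
rewrite [RHS](reindex_inj (h := fun p : 'I_n * 'I_n => (p.2, p.1))) /=; last first.
  by case=> a b [c d] /= [-> ->].
have E2 : \sum_(j : 'I_n * 'I_n | ~~ (j.2 < j.1)) e j.2 j.1 * f j.2 j.1 = \sum_(p in edges e) f p.1 p.2.
  rewrite E1 big_mkcond [RHS]big_mkcond /=; apply: eq_bigr => [[a b]] _ /=.
  case: (ltngtP a b) => H.
  - by rewrite sym fsym.
  - by [].
  - have -> : a = b by apply: val_inj.
    by rewrite (negbTE (irr b)).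
by rewrite -E2; apply: eq_bigl => p.
Qed.

Lemma handshake e : simple_graph e -> 2 * #|edges e| = \sum_v deg e v.
Proof.
move=> se; rewrite -sum1_card.
have := edge_sum (f := fun _ _ => 1) se (fun _ _ => erefl); move=> /= ->.
apply: eq_bigr => a _; rewrite deg_sum; apply: eq_bigr => b _; by rewrite muln1.
Qed.

Lemma M2_sum e : simple_graph e ->
  2 * M2 e = \sum_a \sum_b (e a b) * (deg e a * deg e b).
Proof. move=> se; rewrite /M2; apply: (edge_sum (f := fun a b => deg e a * deg e b)) => // a b; by rewrite mulnC. Qed.

End Gen.
Section Gen2.
Variable n : nat.
Implicit Types (e : rel 'I_n).

Lemma conn_edges e r : simple_graph e -> (forall a, connect e r a) -> n.-1 <= #|edges e|.
Proof.
move=> [sym irr] conn.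
have exP : forall a, exists k, [exists t : k.-tuple 'I_n, path e r t && (last r t == a)].
  move=> a; have /connectP [p pth ->] := conn a.
  by exists (size p); apply/existsP; exists (in_tuple p); rewrite /= pth eqxx.
pose dist a := ex_minn (exP a).
have distle : forall a (p : seq 'I_n), path e r p -> last r p = a -> dist a <= size p.
  move=> a p pp lp; rewrite /dist; case: (ex_minnP (exP a)) => m _; apply.
  by apply/existsP; exists (in_tuple p); rewrite /= pp lp eqxx.
have par_ex : forall a, a != r -> exists c, e c a && (dist c < dist a).
  move=> a nar; rewrite {2}/dist; case: ex_minnP => k /existsP [t /andP [pt /eqP lt]] kmin.
  move: pt lt; case: t => p /eqP Hp /=; rewrite -Hp; case/lastP: p {Hp} => [|p' z].
    by move=> _ /= E; rewrite E eqxx in nar.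
  rewrite rcons_path last_rcons => /andP [pp ez] za.
  exists (last r p'); rewrite -za ez /= size_rcons ltnS.
  exact: distle.
pose par a := if [pick c | e c a && (dist c < dist a)] is Some c then c else r.
have parP : forall a, a != r -> e (par a) a && (dist (par a) < dist a).
  move=> a nar; rewrite /par; case: pickP => [c //|H].
  by have [c Hc] := par_ex a nar; rewrite H in Hc.
pose F (a : 'I_n) := if (a < par a)%N then (a, par a) else (par a, a).
have Fin : forall a, a != r -> F a \in edges e.
  move=> a nar; have /andP [ea _] := parP a nar.
  rewrite /F inE; case: (ltngtP a (par a)) => H /=.
  - by rewrite H sym.
  - by rewrite H.
  - have E : a = par a by apply: val_inj.
    by rewrite -E (negbTE (irr a)) in ea.
have Finj : {in [set~ r] &, injective F}.
  move=> a b; rewrite !in_setC1 => na nb.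
  move: (parP a na) (parP b nb) => /andP[ea da] /andP[eb db].
  rewrite /F; case: ifP => _; case: ifP => _ [] H1 H2; first [ exact H1 | exact H2 | move: (congr1 dist H1) (congr1 dist H2); lia ].
have : #|F @: [set~ r]| <= #|edges e|.
  apply: subset_leq_card; apply/subsetP => p /imsetP [a].
  by rewrite in_setC1 => nar ->; apply: Fin.
by rewrite card_in_imset // cardsC1 card_ord.
Qed.

Lemma tree_no_tri e u x y : is_tree e -> e u x -> e u y -> x != y -> ~~ e x y.
Proof.
move=> [[sym irr] [n0 [conn ecard]]] eux euy nxy; apply/negP => exy.
have nux : (u == x) = false.
    by apply/negP => /eqP E; rewrite E (negbTE (irr x)) in eux.
have nuy : (u == y) = false.
    by apply/negP => /eqP E; rewrite E (negbTE (irr y)) in euy.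
have nxy' : (x == y) = false by apply/negP/negP.
pose e0 := [rel a b | e a b && ~~ (((a == x) && (b == y)) || ((a == y) && (b == x)))].
have s0 : simple_graph e0.
  split; last by move=> a; rewrite /= (negbTE (irr a)).
  by move=> a b; rewrite /= sym; case: (a == x); case: (a == y); case: (b == x); case: (b == y).
have c0 : forall a, connect e0 x a.
  move=> a; apply: (connect_sub _ (conn x a)) => c d ecd.
  case E: (((c == x) && (d == y)) || ((c == y) && (d == x))).
    case/orP: E => /andP[/eqP -> /eqP ->].
      apply: (connect_trans (y:=u)); apply: connect1;
        by rewrite /= ?eux ?euy 1?sym ?eux ?euy ?eqxx ?nux ?nuy ?nxy' ?andbF ?andbT ?(eq_sym y x) ?nxy'.
    apply: (connect_trans (y:=u)); apply: connect1;
      by rewrite /= ?eux ?euy 1?sym ?eux ?euy ?eqxx ?nux ?nuy ?nxy' ?andbF ?andbT ?(eq_sym y x) ?nxy'.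
  by apply: connect1; rewrite /= ecd E.
have h1 := conn_edges s0 c0.
have h2 : #|edges e0| < #|edges e|.
  apply: proper_card; apply/properP; split.
    by apply/subsetP => p; rewrite !inE => /andP[-> /andP[-> _]].
  case: (ltngtP x y) => H.
  - exists (x, y); first by rewrite inE /= H exy.
    by rewrite inE /= H exy !eqxx.
  - exists (y, x); first by rewrite inE /= H sym exy.
    by rewrite inE /= H sym exy !eqxx /= orbT.
  - have E : x = y by apply: val_inj.
    by rewrite E eqxx in nxy'.
lia.
Qed.
End Gen2.

Section Sums.
Variable n : nat.
Lemma sum_eq1 (G : 'I_n -> nat) c : \sum_a (a == c) * G a = G c.
Proof.
rewrite (bigD1 c) //= eqxx mul1n big1 ?addn0 // => a /negbTE ->; by rewrite mul0n.
Qed.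
Lemma sum_eq1r (G : 'I_n -> nat) c : \sum_a G a * (a == c) = G c.
Proof. rewrite -(sum_eq1 G c); apply: eq_bigr => a _; by rewrite mulnC. Qed.
Lemma sum_ind c : \sum_(a : 'I_n) ((a == c) : nat) = 1.
Proof. rewrite -(sum_eq1 (fun _ => 1) c); apply: eq_bigr => a _; by rewrite muln1. Qed.
Lemma S1 c c' K : \sum_(a : 'I_n) \sum_(b : 'I_n) (a == c) * ((b == c') * K) = K.
Proof.
rewrite (eq_bigr (fun a => (a == c) * K)) ?sum_eq1 // => a _.
by rewrite -big_distrr /= sum_eq1.
Qed.
Lemma S2 c (H : 'I_n -> nat) : \sum_(a : 'I_n) \sum_(b : 'I_n) (a == c) * H b = \sum_b H b.
Proof.
rewrite (eq_bigr (fun a => (a == c) * \sum_b H b)) ?sum_eq1 // => a _.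
by rewrite -big_distrr.
Qed.
Lemma S3 c (H : 'I_n -> nat) : \sum_(a : 'I_n) \sum_(b : 'I_n) (b == c) * H a = \sum_a H a.
Proof. apply: eq_bigr => a _; exact: sum_eq1. Qed.
Lemma SS (F G : 'I_n -> 'I_n -> nat) :
  \sum_a \sum_b (F a b + G a b) = \sum_a \sum_b F a b + \sum_a \sum_b G a b.
Proof. rewrite -big_split; apply: eq_bigr => a _; exact: big_split. Qed.
Lemma SLE (F G : 'I_n -> 'I_n -> nat) : (forall a b, F a b <= G a b) ->
  \sum_a \sum_b F a b <= \sum_a \sum_b G a b.
Proof. move=> H; apply: leq_sum => a _; apply: leq_sum => b _; exact: H. Qed.
End Sums.

Lemma conn_ind (T : finType) (e : rel T) (Q : T -> bool) s a :
  Q s -> (forall a b, e a b -> Q a -> Q b) -> connect e s a -> Q a.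
Proof.
move=> Qs step /connectP [p pp ->]; elim: p s Qs pp => //= c p IH s Qs /andP [esc pp].
by apply: IH pp; exact: step Qs.
Qed.

Lemma ar_pw (da db : nat) (al be k1 k2 : bool) :
  da * db + (al * (k1 * db) + be * (k2 * da)) <= (da + al) * (db + be).
Proof. case: al; case: be; case: k1; case: k2 => /=; nia. Qed.

Lemma ar_m1 (A B : nat) : A + 3 = B + 7 -> B < A.
Proof. lia. Qed.

Lemma ar_m2 (M M' P1 P2 S s k dx dy : nat) :
  2 * M + (P1 * P2 + P1 * P2 + 4 + 4 + S + S) <= 2 * M' + (2 * dx + 2 * dx + 2 * dy + 2 * dy) ->
  s <= S -> s + k = 3 ->
  (k = 1 /\ P1 = 4 /\ dx = 3 /\ P2 = dy /\ 1 <= dy) \/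
  (k = 1 /\ P2 = 4 /\ dy = 3 /\ P1 = dx /\ 1 <= dx) \/
  (k = 0 /\ P1 = dx /\ P2 = dy /\ 1 <= dx <= 4 /\ 1 <= dy <= 4) -> M < M'.
Proof.
move=> H1 H2 H3 [[? [? [? [? H]]]]|[[? [? [? [? H]]]]|[? [? [? [/andP [Hx1 Hx2] /andP [Hy1 Hy2]]]]]]]; subst; try lia.
move: Hx1 Hx2 Hy1 Hy2 H1; case: dx => [|[|[|[|[|dx]]]]] //; case: dy => [|[|[|[|[|dy]]]]] //; lia.
Qed.

Lemma ar_half (A B : nat) : 2 * A = 2 * B -> A = B.
Proof. lia. Qed.


Lemma ar1 (A B c1 c2 c3 : nat) : A + (c1 + c2) = B + c3 + c1 + c2 -> A = B + c3.
Proof. lia. Qed.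

Section Main.
Variable n : nat.
Variables (e : rel 'I_n) (u x y v : 'I_n).
Hypothesis tree : is_tree e.
Hypothesis chem : chemical e.
Hypothesis nxy : x != y.
Hypothesis Nu : forall b, e u b = (b == x) || (b == y).
Hypothesis du : deg e u = 2.
Hypothesis dv : deg e v = 3.

Let sym : forall a b, e a b = e b a. Proof. by case: tree => [[]]. Qed.
Let irr : forall a, e a a = false. Proof. by case: tree => [[_ H]] _ a; apply/negbTE. Qed.
Let eux : e u x. Proof. by rewrite Nu eqxx. Qed.
Let euy : e u y. Proof. by rewrite Nu eqxx orbT. Qed.
Let nux : (u == x) = false. Proof. by apply/negbTE/eqP => E; have := eux; by rewrite E irr. Qed.
Let nuy : (u == y) = false. Proof. by apply/negbTE/eqP => E; have := euy; by rewrite E irr. Qed.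
Let nxu : (x == u) = false. Proof. by rewrite eq_sym nux. Qed.
Let nyu : (y == u) = false. Proof. by rewrite eq_sym nuy. Qed.
Let nxy' : (x == y) = false. Proof. exact/negbTE. Qed.
Let nyx' : (y == x) = false. Proof. by rewrite eq_sym nxy'. Qed.
Let nvu : (v == u) = false. Proof. by apply/negbTE/eqP => E; have := dv; by rewrite E du. Qed.
Let nuv : (u == v) = false. Proof. by rewrite eq_sym nvu. Qed.
Let exy : e x y = false. Proof. apply/negbTE; exact: (tree_no_tri tree eux euy nxy). Qed.
Let eyx : e y x = false. Proof. by rewrite sym exy. Qed.
Let exu : e x u. Proof. by rewrite sym eux. Qed.
Let eyu : e y u. Proof. by rewrite sym euy. Qed.

Definition e' : rel 'I_n := fun a b =>
  if a == u then b == v else if b == u then a == v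
  else e a b || ((a == x) && (b == y)) || ((a == y) && (b == x)).

Lemma deg' w : deg e' w = if w == u then 1 else deg e w + (w == v).
Proof.
rewrite !deg_sum; case: (w =P u) => [->|/eqP nwu].
  rewrite /e' eqxx -[RHS](sum_eq1r (fun _ => 1) v); apply: eq_bigr => b _; by rewrite /= mul1n.
have nbw : ~~ ((w == x) && (w == y)).
    by apply/andP => [[/eqP -> ]]; rewrite nxy'.
have key : forall b, (e' w b : nat) + ((w == x) + (w == y)) * (b == u) =
   e w b + (w == v) * (b == u) + (w == x) * (b == y) + (w == y) * (b == x).
  move=> b; rewrite /e' (negbTE nwu).
  case: (b =P u) => [->|/eqP nbu].
    rewrite nuy nux sym Nu !muln1 !muln0 !addn0.
    move: nbw; case: (w == x); case: (w == y) => //= _; by case: (w == v).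
    have nbb : ~~ ((b == x) && (b == y)).
    by apply/andP => [[/eqP -> ]]; rewrite nxy'.
  have f1 : ~~ [&& w == x, b == y & e w b].
    by apply/and3P => [[/eqP -> /eqP ->]]; rewrite exy.
  have f2 : ~~ [&& w == y, b == x & e w b].
    by apply/and3P => [[/eqP -> /eqP ->]]; rewrite eyx.
  move: nbw nbb f1 f2; case: (e w b); case: (w == x); case: (w == y); case: (b == x); case: (b == y) => //= *; by rewrite ?muln0.
have : \sum_b ((e' w b : nat) + ((w == x) + (w == y)) * (b == u)) = \sum_b (e w b + (w == v) * (b == u) + (w == x) * (b == y) + (w == y) * (b == x)).
  by apply: eq_bigr => b _; exact: key.
rewrite !big_split /= !sum_eq1r; exact: ar1.
Qed.

Lemma simple' : simple_graph e'.
Proof.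
split.
  move=> a b; rewrite /e'; case Ea: (a == u); case Eb: (b == u) => //=.
    by rewrite (eqP Ea) (eqP Eb).
  by rewrite sym; case: (e b a); case: (a == x); case: (a == y); case: (b == x); case: (b == y).
move=> a; rewrite /e'; case: (a =P u) => [->|/eqP nau]; first by rewrite ?eqxx nuv.
rewrite ?(negbTE nau) irr /=; apply/negP; case/orP => /andP [/eqP E1 /eqP E2];
  by move: nxy'; rewrite -E1 -E2 eqxx.
Qed.

Lemma dpu : deg e' u = 1. Proof. by rewrite deg' eqxx. Qed.
Lemma dpv : deg e' v = 4. Proof. by rewrite deg' nvu dv eqxx. Qed.
Lemma dpw w : w != u -> deg e' w = deg e w + (w == v).
Proof. by move=> /negbTE nwu; rewrite deg' nwu. Qed.

Lemma conn' a b : connect e' a b.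
Proof.
have [sy _] := simple'.
have cs : connect_sym e' by apply: sym_connect_sym => c d; exact: sy.
pose Q c := (c == u) || connect e' c x.
have step : forall c d, e c d -> Q c -> Q d.
  move=> c d ecd; rewrite /Q => /orP [/eqP cu | cdx].
    rewrite cu Nu in ecd; case/orP: ecd => /eqP ->; apply/orP; right; first exact: connect0.
    by apply: connect1; rewrite /e' nyu nxu /= eqxx eqxx orbT.
  case: (c =P u) => [cu|/eqP ncu].
    rewrite cu Nu in ecd; case/orP: ecd => /eqP ->; apply/orP; right; first exact: connect0.
    by apply: connect1; rewrite /e' nyu nxu /= eqxx eqxx orbT.
  case: (d =P u) => [->|/eqP ndu]; first by rewrite ?eqxx.
  apply/orP; right; apply: connect_trans cdx; apply: connect1.
  by rewrite /e' ?(negbTE ndu) ?(negbTE ncu) sym ecd.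
have Qall : forall c, Q c.
  move=> c; apply: (conn_ind (Q := Q) (s := x) _ step); last by case: tree => _ [_ [H _]]; exact: H.
  by rewrite /Q connect0 orbT.
have cax : forall c, connect e' c x.
  move=> c; case: (c =P u) => [->|/eqP ncu].
    apply: (connect_trans (y := v)); first by apply: connect1; rewrite /e' eqxx.
    by have := Qall v; rewrite /Q nvu.
  by have := Qall c; rewrite /Q (negbTE ncu).
by apply: connect_trans (cax a) _; rewrite cs.
Qed.

Lemma sumdeg' : \sum_w deg e' w = \sum_w deg e w.
Proof.
have H : forall w, deg e' w + (w == u) = deg e w + (w == v).
  move=> w; rewrite deg'; case: (w =P u) => [->|_]; first by rewrite du nuv.
  by rewrite addn0.
have : \sum_w (deg e' w + (w == u)) = \sum_w (deg e w + (w == v)) by apply: eq_bigr => w _.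
by rewrite !big_split /= !sum_ind => /eqP; rewrite eqn_add2r => /eqP.
Qed.

Lemma edges' : #|edges e'| = #|edges e|.
Proof. by apply: ar_half; rewrite !handshake ?sumdeg' //; [case: tree => [] | exact: simple']. Qed.

Lemma inCT' b0 : in_CT b0 e -> in_CT b0 e'.
Proof.
move=> [tr [ch nb]]; split; [|split].
- split; first exact: simple'.
  split; first by case: tree => _ [].
  split; first exact: conn'.
  by rewrite edges'; case: tree => _ [_ [_ ->]].
- move=> w; rewrite deg'; case: (w =P u) => // _; case: (w =P v) => [->|_]; rewrite ?dv /= ?addn0 //.
- rewrite -nb /num_branching; apply: eq_card => w; rewrite !inE deg'.
  case: (w =P u) => [->|_]; first by rewrite du.
  case: (w =P v) => [->|_]; first by rewrite dv.
  by rewrite /= addn0.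
Qed.

Lemma M1' : M1 e < M1 e'.
Proof.
have H : forall w, deg e' w ^ 2 + (w == u) * 3 = deg e w ^ 2 + (w == v) * 7.
  move=> w; rewrite deg'; case: (w =P u) => [->|_]; first by rewrite du nuv.
  case: (w =P v) => [->|_]; first by rewrite dv.
  by rewrite /= !addn0.
have : \sum_w (deg e' w ^ 2 + (w == u) * 3) = \sum_w (deg e w ^ 2 + (w == v) * 7) by apply: eq_bigr => w _.
rewrite !big_split /= !sum_eq1; exact: ar_m1.
Qed.

Lemma e'u b : e' u b = (b == v). Proof. by rewrite /e' eqxx. Qed.
Lemma e'_u a : a != u -> e' a u = (a == v). Proof. by move=> /negbTE H; rewrite /e' H eqxx. Qed.
Lemma e'_n a b : a != u -> b != u ->
  e' a b = e a b || ((a == x) && (b == y)) || ((a == y) && (b == x)).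
Proof. by move=> /negbTE H1 /negbTE H2; rewrite /e' H1 H2. Qed.

Lemma gxy b : e u b * (2 * deg e b) = (b == x) * (2 * deg e x) + (b == y) * (2 * deg e y).
Proof.
rewrite Nu; case: (b =P x) => [->|_]; first by rewrite ?eqxx nxy' /= ?mul1n ?mul0n ?addn0.
by case: (b =P y) => [->|_] //=; rewrite mul1n.
Qed.

Lemma Vz1 a b (k : bool) : ~~ e a b -> (a == v) * ((e v b && k) * deg e b) = 0.
Proof. by move=> H; case: (eqVneq a v) => [<-|_]; rewrite ?(negbTE H) ?mul0n ?muln0. Qed.
Lemma Vz2 a b (k : bool) : ~~ e a b -> (b == v) * ((e v a && k) * deg e a) = 0.
Proof. by move=> H; case: (eqVneq b v) => [<-|_]; rewrite ?(sym b a) ?(negbTE H) ?mul0n ?muln0. Qed.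

Definition Ctm a b := (a == u) * ((b == x) * (2 * deg e x)) + (a == x) * ((b == u) * (2 * deg e x))
  + (a == u) * ((b == y) * (2 * deg e y)) + (a == y) * ((b == u) * (2 * deg e y)).
Definition Atm a b := (a == x) * ((b == y) * (deg e' x * deg e' y))
  + (a == y) * ((b == x) * (deg e' x * deg e' y))
  + (a == u) * ((b == v) * 4) + (a == v) * ((b == u) * 4)
  + (a == v) * ((e v b && (b != u)) * deg e b) + (b == v) * ((e v a && (a != u)) * deg e a).

Lemma pw a b : e a b * (deg e a * deg e b) + Atm a b <= e' a b * (deg e' a * deg e' b) + Ctm a b.
Proof.
rewrite /Atm /Ctm.
case: (eqVneq a u) => [->|nau].
  rewrite e'u ?eqxx ?nux ?nuy ?nuv du dpu /=.
  rewrite gxy andbF !mul0n !mul1n !add0n !addn0 muln0 addn0 [X in _ <= X]addnC leq_add2l.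
  by case: (b =P v) => [->|_]; rewrite ?dpv.
case: (eqVneq b u) => [->|nbu].
  rewrite (sym a u) du (mulnC (deg e a) 2) gxy e'_u // dpu ?nux ?nuy ?nuv ?eqxx /=.
  rewrite andbF !mul0n !muln0 !mul1n !muln1 !add0n !addn0 [X in _ <= X]addnC leq_add2l.
  by case: (a =P v) => [->|_]; rewrite ?dpv.
rewrite e'_n // ?mul0n ?muln0 ?addn0.
case Exy: ((a == x) && (b == y)).
  case/andP: Exy => /eqP Ea /eqP Eb; subst a b.
  rewrite Vz1 ?Vz2 ?exy ?eyx // ?eqxx ?nxy' ?nyx' /= ?mul0n ?muln0 ?mul1n ?add0n ?addn0.
  by [].
case Eyx: ((a == y) && (b == x)).
  case/andP: Eyx => /eqP Ea /eqP Eb; subst a b.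
  rewrite Vz1 ?Vz2 ?exy ?eyx // ?eqxx ?nxy' ?nyx' /= ?mul0n ?muln0 ?mul1n ?add0n ?addn0 ?orbT.
  by rewrite mulnC.
have Z1 : forall K, (a == x) * ((b == y) * K) = 0.
  by move=> K; move: Exy; case: (a == x); case: (b == y) => //= _; rewrite ?mul0n ?muln0.
have Z2 : forall K, (a == y) * ((b == x) * K) = 0.
  by move=> K; move: Eyx; case: (a == y); case: (b == x) => //= _; rewrite ?mul0n ?muln0.
rewrite Z1 Z2 !orbF !add0n.
case Eab: (e a b).
  rewrite (dpw nau) (dpw nbu) !mul1n.
  exact: ar_pw.
rewrite Vz1 ?Vz2 ?Eab //.

Qed.

Lemma M2' : M2 e < M2 e'.
Proof.
have se : simple_graph e by case: tree.
have le : \sum_a \sum_b (e a b * (deg e a * deg e b) + Atm a b) <=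
          \sum_a \sum_b (e' a b * (deg e' a * deg e' b) + Ctm a b).
  by apply: SLE => a b; exact: pw.
rewrite (SS (fun a b => e a b * (deg e a * deg e b)) Atm) in le.
rewrite (SS (fun a b => e' a b * (deg e' a * deg e' b)) Ctm) in le.
rewrite -M2_sum // -M2_sum in le; last exact: simple'.
rewrite /Atm /Ctm !SS !S1 S2 S3 in le.
have Sge : \sum_b ((e v b && (b != u)) : nat) <= \sum_b (e v b && (b != u)) * deg e b.
  apply: leq_sum => b _; case: andP => [[evb _]|_] //.
  rewrite mul1n /deg card_gt0; apply/set0Pn; exists v; by rewrite inE sym.
have Scnt : \sum_b ((e v b && (b != u)) : nat) + e v u = 3.
  rewrite -dv deg_sum -(sum_eq1 (fun b => (e v b : nat)) u) -big_split; apply: eq_bigr => b _ /=.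
  by case: (eqVneq b u) => [->|_]; rewrite ?andbF ?andbT ?mul0n ?mul1n ?addn0.
have degpos : forall a b, e a b -> 0 < deg e a.
  by move=> a b eab; rewrite /deg card_gt0; apply/set0Pn; exists b; rewrite inE.
have evu : e v u = (v == x) || (v == y) by rewrite sym Nu.
apply: (ar_m2 le Sge Scnt).
case: (eqVneq v x) => [Evx|nvx].
  have h1 : deg e' x = 4 by rewrite -Evx dpv.
  have h2 : deg e x = 3 by rewrite -Evx dv.
  have h3 : e v u by rewrite evu Evx eqxx.
  have nyv : (y == v) = false by rewrite Evx nyx'.
  left; rewrite h1 h2 h3 (dpw (negbT nyu)) nyv addn0; do 4 split => //; exact: degpos eyu.
case: (eqVneq v y) => [Evy|nvy].
  have h1 : deg e' y = 4 by rewrite -Evy dpv.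
  have h2 : deg e y = 3 by rewrite -Evy dv.
  have h3 : e v u by rewrite evu Evy eqxx orbT.
  have nxv : (x == v) = false by rewrite Evy nxy'.
  right; left; rewrite h1 h2 h3 (dpw (negbT nxu)) nxv addn0; do 4 split => //; exact: degpos exu.
right; right; rewrite evu (negbTE nvx) (negbTE nvy) (dpw (negbT nxu)) (dpw (negbT nyu)).
rewrite eq_sym (negbTE nvx) eq_sym (negbTE nvy) !addn0; do 3 split => //.
by rewrite (degpos _ _ exu) (degpos _ _ eyu) !chem.
Qed.
End Main.

Theorem lemma7 (n b : nat) (e : rel 'I_n) :
  1 <= b -> 2 * b + 2 < n ->
  (is_max_in_CT (@M1 n) b e \/ is_max_in_CT (@M2 n) b e) ->
  ~ ((exists u : 'I_n, deg e u = 2) /\ (exists v : 'I_n, deg e v = 3)).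
Proof.
move=> _ _ Hmax [[u du] [v dv]].
have inct : in_CT b e by case: Hmax => [[]|[]].
case: (inct) => tree [chem _].
have /cards2P [x [y [nxy Hs]]] : #|[set c | e u c]| == 2 by rewrite -/(deg e u) du.
have Nu : forall c, e u c = (c == x) || (c == y).
  by move=> c; move/setP/(_ c): Hs; rewrite !inE.
have ct' := inCT' tree chem nxy Nu du dv inct.
case: Hmax => [[_ H]|[_ H]].
  by have := leq_ltn_trans (H _ ct') (M1' tree nxy Nu du dv); rewrite ltnn.
by have := leq_ltn_trans (H _ ct') (M2' tree chem nxy Nu du dv); rewrite ltnn.
Qed.
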